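(* For every $D\in\mathrm{SL}(d+1,\mathbb R)\setminus\mathrm{SO}(d+1)$ there exist $n>0$, $R_0,R_1,\dots,R_n\in\mathrm{SO}(d+1)$ and $\alpha_1,\dots,\alpha_n\in\{-1,+1\}$ such that $$R_0D^{\alpha_1}R_1D^{\alpha_2}R_2\cdots R_{n-1}D^{\alpha_n}R_n=\mathrm{diag}(r_1,\dots,r_{d+1})$$ with $0<r_{d+1}<\min_{1\le i\le d}r_i$ and $\max_{1<i\le d}r_i^d<r_1\cdots r_d$. *)

(* Defs.v *)
From HB Require Import structures.
From mathcomp Require Import all_boot all_order all_algebra.
From mathcomp Require Import reals.
Set Implicit Arguments. Unset Strict Implicit. Unset Printing Implicit Defensive.
Import Order.TTheory GRing.Theory Num.Theory.
Local Open Scope ring_scope.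

Definition mxSL (R : realType) (m : nat) (A : 'M[R]_m) : Prop := \det A = 1.

Definition mxSO (R : realType) (m : nat) (A : 'M[R]_m) : Prop :=
  A *m A^T = 1%:M /\ \det A = 1.

(* D^alpha for alpha in {-1,+1}: true encodes +1, false encodes -1. *)
Definition mxpow_sign (R : realType) (m : nat) (D : 'M[R]_m) (a : bool) : 'M[R]_m :=
  if a then D else invmx D.

(* The word R_0 D^{a_1} R_1 D^{a_2} R_2 ... D^{a_n} R_n,
   with Rs : 'I_n.+1 -> matrices (R_0..R_n) and a : 'I_n -> bool (a_1..a_n). *)
Definition word_prod (R : realType) (m n : nat) (D : 'M[R]_m)
    (Rs : 'I_n.+1 -> 'M[R]_m) (a : 'I_n -> bool) : 'M[R]_m :=
  Rs ord0 *m \big[mulmx/1%:M]_(i < n) (mxpow_sign D (a i) *m Rs (lift ord0 i)).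

(* Main.v *)
Require Import Defs.
From HB Require Import structures.
From mathcomp Require Import all_boot all_order all_algebra.
From mathcomp Require Import reals.
From mathcomp Require Import fingroup perm.
From mathcomp.real_closed Require Import complex.
Import Order.TTheory GRing.Theory Num.Theory.
Local Open Scope ring_scope.
From mathcomp Require Import ring lra.
Local Notation cRe := (@complex.Re _).
Local Notation cIm := (@complex.Im _).

Lemma dot_ge0 (R : realType) n (x : 'rV[R]_n) : 0 <= (x *m x^T) 0 0.
Proof. rewrite mxE; apply: sumr_ge0 => k _; rewrite mxE -expr2; exact: sqr_ge0. Qed.

Lemma dot_eq0 (R : realType) n (x : 'rV[R]_n) : (x *m x^T) 0 0 = 0 -> x = 0.
Proof.
rewrite mxE => /psumr_eq0P H; apply/rowP => k; rewrite mxE.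
have H0 : forall i : 'I_n, true -> 0 <= x 0 i * x^T i 0.
  by move=> i _; rewrite mxE -expr2; exact: sqr_ge0.
have := H H0 k isT; rewrite mxE -expr2 => /eqP.
by rewrite sqrf_eq0 => /eqP.
Qed.

Lemma ReM (R : realType) (x y : R[i]) : cRe (x * y) = cRe x * cRe y - cIm x * cIm y.
Proof. by case: x => a b; case: y => c e. Qed.
Lemma ImM (R : realType) (x y : R[i]) : cIm (x * y) = cRe x * cIm y + cIm x * cRe y.
Proof. by case: x => a b; case: y => c e. Qed.
Lemma Re_sum (R : realType) n (f : 'I_n -> R[i]) : cRe (\sum_i f i) = \sum_i cRe (f i).
Proof. by apply: (big_morph (@complex.Re R)) => // -[? ?] [? ?]. Qed.
Lemma Im_sum (R : realType) n (f : 'I_n -> R[i]) : cIm (\sum_i f i) = \sum_i cIm (f i).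
Proof. by apply: (big_morph (@complex.Im R)) => // -[? ?] [? ?]. Qed.

Lemma sym_eigvec (R : realType) n (S : 'M[R]_n.+1) : S^T = S ->
  exists a (p : 'rV[R]_n.+1), p != 0 /\ p *m S = a *: p.
Proof.
move=> Ssym.
pose SC := map_mx (real_complex R) S.
have [z /eigenvalueP [v vS vN0]] := eigenvalue_closed SC (ltn0Sn n).
pose p := map_mx (@complex.Re R) v; pose q := map_mx (@complex.Im R) v.
have pS : p *m S = cRe z *: p - cIm z *: q.
  apply/rowP => j; have /rowP /(_ j) := vS; rewrite !mxE => /(congr1 cRe).
  rewrite Re_sum ReM => <-; apply: eq_bigr => k _; rewrite !mxE ReM /=.
  by rewrite mulr0 subr0.
have qS : q *m S = cIm z *: p + cRe z *: q.
  apply/rowP => j; have /rowP /(_ j) := vS; rewrite !mxE => /(congr1 cIm).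
  rewrite Im_sum ImM addrC => <-; apply: eq_bigr => k _; rewrite !mxE ImM /=.
  by rewrite mulr0 add0r.
have trE : forall (x y : 'rV[R]_n.+1) (M : 'M[R]_n.+1), M^T = M ->
    (x *m M *m y^T) 0 0 = (y *m M *m x^T) 0 0.
  move=> x y M MT; have -> : (x *m M *m y^T) 0 0 = (x *m M *m y^T)^T 0 0 by rewrite [RHS]mxE.
  by rewrite !trmx_mul trmxK MT mulmxA.
have pq : (p *m q^T) 0 0 = (q *m p^T) 0 0.
  by have := trE p q 1%:M (trmx1 _ _); rewrite !mulmx1.
have := trE p q S Ssym; rewrite pS qS !mulmxDl ?mulmxBl ?mulNmx -!scalemxAl.
rewrite !mxE => H.
have bz : cIm z * ((p *m p^T) 0 0 + (q *m q^T) 0 0) = 0.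
  have pq2 := pq; rewrite !mxE in pq2; rewrite pq2 in H.
  rewrite !mxE; lra.
have vpq : p = 0 -> q = 0 -> v = 0.
  move=> p0 q0; apply/rowP => k; have /rowP/(_ k) := p0; have /rowP/(_ k) := q0.
  by rewrite !mxE; case: (v 0 k) => a b /= -> ->.
have b0 : cIm z = 0.
  have [p0|pN0] := eqVneq p 0.
    have [q0|qN0] := eqVneq q 0; first by move: vN0; rewrite vpq ?eqxx.
    move: bz => /eqP; rewrite mulf_eq0 => /orP[/eqP //|].
    rewrite p0 mul0mx mxE add0r => /eqP /dot_eq0 /eqP; rewrite (negPf qN0).
    by [].
  move: bz => /eqP; rewrite mulf_eq0 => /orP[/eqP //|/eqP].
  move=> /eqP; rewrite paddr_eq0 ?dot_ge0 // => /andP[/eqP /dot_eq0 /eqP].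
  by rewrite (negPf pN0).
have [p0|pN0] := eqVneq p 0.
  exists (cRe z), q; split.
    by apply: contra vN0 => /eqP q0; rewrite vpq.
  by rewrite qS b0 scale0r add0r.
exists (cRe z), p; split => //.
by rewrite pS b0 scale0r subr0.
Qed.

Lemma mxBE (R : realType) m n (A B : 'M[R]_(m, n)) i j : (A - B) i j = A i j - B i j.
Proof. by rewrite !mxE. Qed.
Lemma mxDE (R : realType) m n (A B : 'M[R]_(m, n)) i j : (A + B) i j = A i j + B i j.
Proof. by rewrite !mxE. Qed.
Lemma dotC (R : realType) n (x y : 'rV[R]_n) : (x *m y^T) 0 0 = (y *m x^T) 0 0.
Proof.
have -> : (x *m y^T) 0 0 = (x *m y^T)^T 0 0 by rewrite [RHS]mxE.
by rewrite trmx_mul trmxK.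
Qed.

Lemma householder (R : realType) n (u : 'rV[R]_n.+1) : (u *m u^T) 0 0 = 1 ->
  exists Q : 'M[R]_n.+1, Q *m Q^T = 1%:M /\ row 0 Q = u.
Proof.
move=> uu.
pose e : 'rV[R]_n.+1 := delta_mx 0 0.
have ee : (e *m e^T) 0 0 = 1 by rewrite trmx_delta mul_delta_mx mxE !eqxx.
have eu : (e *m u^T) 0 0 = u 0 0 by rewrite -rowE !mxE.
pose w := u - e.
have [w0|wN0] := eqVneq w 0.
  exists 1%:M; rewrite trmx1 mulmx1 row1; split => //.
  by apply/esym/eqP; rewrite -subr_eq0 -/w w0.
pose c := (w *m w^T) 0 0.
have cE : c = 2 - 2 * u 0 0.
  rewrite /c /w linearB /= mulmxBl !mulmxBr !mxBE uu ee eu dotC eu; lra.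
have cN0 : c != 0 by apply: contra wN0 => /eqP /dot_eq0 ->.
pose W := w^T *m w.
pose Q := 1%:M - (2 / c) *: W.
have QT : Q^T = Q by rewrite /Q linearB /= trmx1 linearZ /= /W trmx_mul trmxK.
have WW : W *m W = c *: W.
  by rewrite /W mulmxA -(mulmxA w^T) [w *m w^T]mx11_scalar mul_mx_scalar -scalemxAl.
exists Q; rewrite QT; split.
  rewrite /Q mulmxBl mulmxBr mulmx1 mul1mx mulmxBr mulmx1 -scalemxAl -scalemxAr WW !scalerA.
  have -> : 2 / c * (2 / c) * c = 2 / c + 2 / c by field.
  by rewrite scalerDl opprB addrK subrK.
rewrite rowE -/e /Q mulmxBr mulmx1 -scalemxAr /W mulmxA [e *m w^T]mx11_scalar.
rewrite mul_scalar_mx scalerA.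
have -> : (e *m w^T) 0 0 = u 0 0 - 1 by rewrite /w linearB /= mulmxBr mxBE eu ee.
have -> : 2 / c * (u 0 0 - 1) = -1.
  rewrite cE; field; move: cN0; rewrite cE; apply: contra => /eqP H; apply/eqP; lra.
by rewrite scaleN1r opprK /w addrC subrK.
Qed.
Lemma mxZE (R : realType) m n (a : R) (A : 'M[R]_(m, n)) i j : (a *: A) i j = a * A i j.
Proof. by rewrite !mxE. Qed.

Lemma spectral (R : realType) n (S : 'M[R]_n) : S^T = S ->
  exists Q : 'M[R]_n, Q *m Q^T = 1%:M /\ is_diag_mx (Q *m S *m Q^T).
Proof.
elim: n S => [|n IH] S Ssym.
  exists 1%:M; split; first by rewrite trmx1 mulmx1.
  by apply/is_diag_mxP => -[].
have [a [p [pN0 pS]]] := sym_eigvec _ _ _ Ssym.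
have pp0 : 0 < (p *m p^T) 0 0.
  rewrite lt0r dot_ge0 andbT; apply: contra pN0 => /eqP /dot_eq0 ->; by [].
pose s := Num.sqrt ((p *m p^T) 0 0).
have s0 : 0 < s by rewrite sqrtr_gt0.
have ss : s ^+ 2 = (p *m p^T) 0 0 by rewrite sqr_sqrtr // ltW.
pose u := s^-1 *: p.
have uu : (u *m u^T) 0 0 = 1.
  rewrite /u linearZ /= -scalemxAl -scalemxAr !mxZE -ss; field; exact: lt0r_neq0.
have uS : u *m S = a *: u by rewrite /u -scalemxAl pS !scalerA mulrC.
have [Q [QQ Q0]] := householder _ _ _ uu.
have [T TE] : {T : 'M[R]_(1 + n) | T = Q *m S *m Q^T} := exist _ _ erefl.
have TT : T^T = T by rewrite TE !trmx_mul trmxK Ssym mulmxA.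
have T0 : forall j : 'I_(1 + n), T 0 j = a * (j == 0)%:R.
  move=> j; have -> : T 0 j = row 0 T 0 j by rewrite [RHS]mxE.
  rewrite TE !row_mul Q0 uS -scalemxAl -Q0 -row_mul QQ row1 mxZE mxE.
  by rewrite eqxx eq_sym.
have ur0 : ursubmx T = 0.
  apply/matrixP => i j; rewrite !mxE ord1.
  have -> : lshift n (0 : 'I_1) = 0 by apply: val_inj.
  by rewrite T0; case: eqP => [/(congr1 val)|]; rewrite ?mulr0.
have dl0 : dlsubmx T = 0.
  by rewrite -[T]TT -trmx_ursub ur0 trmx0.
have S'sym : (drsubmx T)^T = drsubmx T by rewrite trmx_drsub TT.
have [Q' [Q'Q' Q'd]] := IH _ S'sym.
pose B : 'M[R]_(1 + n) := block_mx 1%:M 0 0 Q'.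
have BT : B^T = block_mx 1%:M 0 0 Q'^T by rewrite tr_block_mx trmx1 !trmx0.
have BB : B *m B^T = 1%:M.
  rewrite BT /B mulmx_block !mulmx0 !mul0mx !mulmx1 !addr0 !add0r Q'Q'.
  by rewrite -scalar_mx_block.
have BTB : is_diag_mx (B *m T *m B^T).
  rewrite -[T]submxK ur0 dl0 BT /B !mulmx_block !mulmx0 !mul0mx !mulmx1 !mul1mx !addr0 !add0r.
  rewrite is_diag_block_mx // eqxx /= mx11_is_diag /=.
  by rewrite mul0mx eqxx.
exists (B *m Q); split.
  by rewrite trmx_mul mulmxA -(mulmxA B) QQ mulmx1; exact: BB.
have -> : B *m Q *m S *m (B *m Q)^T = B *m T *m B^T.
  by rewrite TE trmx_mul !mulmxA.
exact: BTB.
Qed.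
Lemma svd (R : realType) n (D : 'M[R]_n) : \det D != 0 ->
  exists (U V : 'M[R]_n) (s : 'rV[R]_n), U *m U^T = 1%:M /\ V *m V^T = 1%:M /\
    (forall i, 0 < s 0 i) /\ D = U *m diag_mx s *m V.
Proof.
move=> dD.
have Ssym : (D^T *m D)^T = D^T *m D by rewrite trmx_mul trmxK.
have [V [VV /diag_mxP [l lE]]] := spectral _ _ _ Ssym.
have VTV : V^T *m V = 1%:M by apply: mulmx1C.
pose M := D *m V^T.
have MM : M^T *m M = diag_mx l by rewrite /M trmx_mul trmxK -lE !mulmxA.
have l_ge0 : forall i, 0 <= l 0 i.
  move=> i; have /matrixP/(_ i i) := MM; rewrite [RHS]mxE eqxx mulr1n => <-.
  rewrite mxE; apply: sumr_ge0 => k _; rewrite mxE -expr2; exact: sqr_ge0.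
have dV : \det V != 0.
  apply/negP => /eqP dV0; have := congr1 determinant VV.
  by rewrite det_mulmx dV0 mul0r det1 => /eqP; rewrite eq_sym oner_eq0.
have l_neq0 : forall i, l 0 i != 0.
  move=> i; have : \det (diag_mx l) != 0.
    by rewrite -MM det_mulmx det_tr /M det_mulmx det_tr !mulf_neq0.
  rewrite det_diag (bigD1 i) //= mulf_eq0 negb_or => /andP[] //.
have l_gt0 : forall i, 0 < l 0 i by move=> i; rewrite lt0r l_neq0 l_ge0.
have [s sE] : {s : 'rV[R]_n | s = \row_i Num.sqrt (l 0 i)} := exist _ _ erefl.
have s_gt0 : forall i, 0 < s 0 i by move=> i; rewrite sE mxE sqrtr_gt0.
have ss : forall i, s 0 i * s 0 i = l 0 i.
  by move=> i; rewrite sE mxE -expr2 sqr_sqrtr // ltW.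
pose t := \row_i (s 0 i)^-1.
pose U := M *m diag_mx t.
have UTU : U^T *m U = 1%:M.
  rewrite /U trmx_mul tr_diag_mx mulmxA -(mulmxA _ M^T) MM !mulmx_diag.
  rewrite -diag_const_mx; congr diag_mx; apply/rowP => j; rewrite !mxE -ss.
  by field; rewrite lt0r_neq0 // s_gt0.
exists U, V, s; split; first exact: mulmx1C.
split; first exact: VV.
split; first exact: s_gt0.
rewrite /U -(mulmxA M) mulmx_diag.
have -> : diag_mx (\row_j (t 0 j * s 0 j)) = 1%:M.
  rewrite -diag_const_mx; congr diag_mx; apply/rowP => j; rewrite !mxE.
  by field; rewrite lt0r_neq0 // s_gt0.
by rewrite mulmx1 /M -mulmxA VTV mulmx1.
Qed.
Lemma argmax_ex (R : realType) m (f : 'I_m.+1 -> R) : exists p, forall i, f i <= f p.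
Proof. by case: (@arg_maxP _ _ _ ord0 xpredT f) => // p _ H; exists p => i; apply: H. Qed.
Lemma argmin_ex (R : realType) m (f : 'I_m.+1 -> R) : exists p, forall i, f p <= f i.
Proof. by case: (@arg_minP _ _ _ ord0 xpredT f) => // p _ H; exists p => i; apply: H. Qed.

Definition Jmx (R : realType) m : 'M[R]_m.+1 :=
  diag_mx (\row_i (if i == 0 then -1 else 1)).

Lemma JT (R : realType) m : (Jmx R m)^T = Jmx R m.
Proof. exact: tr_diag_mx. Qed.

Lemma Jdiag (R : realType) m (w : 'rV[R]_m.+1) :
  Jmx R m *m diag_mx w *m Jmx R m = diag_mx w.
Proof.
rewrite /Jmx !mulmx_diag; congr diag_mx; apply/rowP => j; rewrite !mxE.
by case: (j == 0); rewrite ?mulN1r ?mulrN1 ?opprK ?mul1r ?mulr1.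
Qed.

Lemma JJ (R : realType) m : Jmx R m *m Jmx R m = 1%:M.
Proof.
rewrite /Jmx mulmx_diag -diag_const_mx; congr diag_mx; apply/rowP => j; rewrite !mxE.
by case: (j == 0); rewrite ?mulN1r ?opprK ?mul1r.
Qed.

Lemma detJ (R : realType) m : \det (Jmx R m) = -1.
Proof.
rewrite det_diag (bigD1 0) //= big1 ?mulr1; first by rewrite mxE eqxx.
by move=> i /negPf Hi; rewrite mxE Hi.
Qed.

Lemma orth_det (R : realType) m (A : 'M[R]_m) : A *m A^T = 1%:M ->
  \det A = 1 \/ \det A = -1.
Proof.
move=> /(congr1 determinant); rewrite det_mulmx det_tr det1 -expr2 => /eqP.
by rewrite sqrf_eq1 => /orP[] /eqP; [left|right].
Qed.

Lemma SO_mul (R : realType) m (A B : 'M[R]_m) : mxSO A -> mxSO B -> mxSO (A *m B).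
Proof.
move=> [AA dA] [BB dB]; split; last by rewrite det_mulmx dA dB mulr1.
by rewrite trmx_mul mulmxA -(mulmxA A) BB mulmx1.
Qed.

Lemma SO_tr (R : realType) m (A : 'M[R]_m) : mxSO A -> mxSO A^T.
Proof. by move=> [AA dA]; split; [rewrite trmxK; apply: mulmx1C | rewrite det_tr]. Qed.

Lemma permSO (R : realType) m (s : 'S_m.+1) : exists P : 'M[R]_m.+1,
  mxSO P /\ forall w : 'rV[R]_m.+1, P *m diag_mx w *m P^T = diag_mx (\row_i w 0 (s i)).
Proof.
pose P0 : 'M[R]_m.+1 := perm_mx s.
have P0P0 : P0 *m P0^T = 1%:M by rewrite /P0 tr_perm_mx -perm_mxM mulgV perm_mx1.
have P0w : forall w : 'rV[R]_m.+1, P0 *m diag_mx w *m P0^T = diag_mx (\row_i w 0 (s i)).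
  move=> w; rewrite /P0 tr_perm_mx -col_permE -row_permE.
  by apply/matrixP => i j; rewrite !mxE (inj_eq perm_inj).
have [d1|dm1] := orth_det _ _ _ P0P0.
  by exists P0; split.
exists (Jmx R m *m P0); split.
  split; last by rewrite det_mulmx detJ dm1 mulrNN mulr1.
  by rewrite trmx_mul mulmxA -(mulmxA _ P0) P0P0 mulmx1 JT JJ.
move=> w; rewrite trmx_mul JT !mulmxA -(mulmxA _ P0) -(mulmxA _ (P0 *m diag_mx w)).
by rewrite P0w -mulmxA mulmxA Jdiag.
Qed.
Lemma svdSO (R : realType) m (D : 'M[R]_m.+1) : \det D = 1 ->
  exists (U V : 'M[R]_m.+1) (s : 'rV[R]_m.+1), mxSO U /\ mxSO V /\
    (forall i, 0 < s 0 i) /\ D = U *m diag_mx s *m V.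
Proof.
move=> dD.
have dD0 : \det D != 0 by rewrite dD oner_neq0.
have [U [V [s [UU [VV [s0 DE]]]]]] := svd _ _ D dD0.
have ps : 0 < \prod_i s 0 i by apply: prodr_gt0 => i _; exact: s0.
have dE : \det U * \prod_i s 0 i * \det V = 1 by rewrite -det_diag -!det_mulmx -DE.
have [dV|dV] := orth_det _ _ _ VV; have [dU|dU] := orth_det _ _ _ UU.
- by exists U, V, s.
- by move: dE; rewrite dU dV; lra.
- by move: dE; rewrite dU dV; lra.
exists (U *m Jmx R m), (Jmx R m *m V), s; split; last split.
- split; last by rewrite det_mulmx detJ dU mulrNN mulr1.
  by rewrite trmx_mul JT mulmxA -(mulmxA U) JJ mulmx1.
- split; last by rewrite det_mulmx detJ dV mulrNN mulr1.
  by rewrite trmx_mul JT mulmxA -(mulmxA _ V) VV mulmx1 JJ.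
split; first exact: s0.
have -> : U *m Jmx R m *m diag_mx s *m (Jmx R m *m V) =
  U *m (Jmx R m *m diag_mx s *m Jmx R m) *m V by rewrite !mulmxA.
by rewrite Jdiag.
Qed.
Lemma ord_neq_pos d (p q : 'I_d.+1) : p != q -> (0 < d)%N.
Proof. by case: d p q => // p q; rewrite (ord1 p) (ord1 q) eqxx. Qed.

Theorem mainTheorem16 (R : realType) (d : nat) (D : 'M[R]_d.+1) :
  mxSL D -> ~ mxSO D ->
  exists (n : nat) (Rs : 'I_n.+1 -> 'M[R]_d.+1) (a : 'I_n -> bool)
         (r : 'I_d.+1 -> R),
    (0 < n)%N /\
    (forall k, mxSO (Rs k)) /\
    word_prod D Rs a = diag_mx (\row_i r i) /\
    (* 0 < r_{d+1} < min_{1<=i<=d} r_i  (0-based: r ord_max vs r i, i < d) *)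
    0 < r ord_max /\
    (forall i : 'I_d.+1, (i < d)%N -> r ord_max < r i) /\
    (* max_{1<i<=d} r_i^d < r_1 ... r_d  (0-based: 1 <= i < d) *)
    (forall i : 'I_d.+1, (1 <= i)%N -> (i < d)%N ->
       r i ^+ d < \prod_(j < d) r (widen_ord (leqnSn d) j)).
Proof.
rewrite /mxSL => dD notSO.
have [U [V [s [USO [VSO [s0 DE]]]]]] := svdSO _ _ D dD.
have [UU dU] := USO; have [VV dV] := VSO.
have [p Hp] := argmax_ex _ _ (fun i => s 0 i).
have [q Hq] := argmin_ex _ _ (fun i => s 0 i).
have lt_qp : s 0 q < s 0 p.
  rewrite lt_neqAle Hp andbT; apply/negP => /eqP eqqp.
  have sc : forall i, s 0 i = s 0 p.
    by move=> i; apply/le_anti; rewrite Hp -eqqp Hq.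
  have ps : \prod_i s 0 i = s 0 p ^+ d.+1.
    by rewrite (eq_bigr (fun=> s 0 p)) ?prodr_const ?card_ord // => i _; rewrite sc.
  have : \det D = s 0 p ^+ d.+1 by rewrite DE !det_mulmx dU dV det_diag ps mul1r mulr1.
  rewrite dD => /esym/eqP; rewrite pexpr_eq1 // ?ltW // => /eqP sp1.
  apply: notSO; split=> //.
  have s1 : diag_mx s = 1%:M.
    by rewrite -diag_const_mx; congr diag_mx; apply/rowP => i; rewrite !mxE sc sp1.
  by rewrite DE s1 mulmx1 trmx_mul mulmxA -(mulmxA U) VV mulmx1 UU.
have pq : p != q by apply: contraTneq lt_qp => ->; rewrite ltxx.
have d0 : (0 < d)%N by apply: ord_neq_pos pq.
pose dd : 'I_d.+1 := ord_max.
have zdd : (0 : 'I_d.+1) != dd by rewrite -val_eqE /= eq_sym -lt0n.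
pose e := tperm 0 p q.
have e0 : (0 : 'I_d.+1) != e.
  apply: contra pq => /eqP/(congr1 (tperm 0 p)); rewrite tpermL tpermK => ->; by [].
pose pi := (tperm dd e * tperm 0 p)%g.
pose tau := (tperm 0 dd * pi)%g.
have pi0 : pi 0 = p by rewrite permM tpermD 1?eq_sym // tpermL.
have pidd : pi dd = q by rewrite permM tpermL tpermK.
have tau0 : tau 0 = q by rewrite permM tpermL.
have taudd : tau dd = p by rewrite permM tpermR.
have tauE : forall i, i != 0 -> i != dd -> tau i = pi i.
  by move=> i i0 idd; rewrite permM tpermD // eq_sym.
have [P [PSO PE]] := permSO R d pi.
have [T [TSO TE]] := permSO R d tau.
pose s' := \row_i (s 0 i)^-1.
have sN0 : forall i, s 0 i != 0 by move=> i; rewrite lt0r_neq0.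
have Dinv : invmx D = V^T *m diag_mx s' *m U^T.
  have DX : D *m (V^T *m diag_mx s' *m U^T) = 1%:M.
    rewrite DE !mulmxA -(mulmxA _ V) VV mulmx1 -(mulmxA U) mulmx_diag.
    have -> : diag_mx (\row_j (s 0 j * s' 0 j)) = 1%:M.
      rewrite -diag_const_mx; congr diag_mx; apply/rowP => j; rewrite !mxE divff //.
    by rewrite mulmx1 UU.
  have Du : D \in unitmx by rewrite unitmxE dD unitr1.
  by rewrite -[invmx D]mulmx1 -DX !mulmxA (mulVmx Du) mul1mx.
pose R0 := P *m U^T.
pose R1 := V^T *m P^T *m T *m V.
pose R2 := U *m T^T.
pose Rs := fun k : 'I_3 => nth 0 [:: R0; R1; R2] k.
pose a := fun i : 'I_2 => (i == 0 :> nat).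
pose r := fun i => s 0 (pi i) * (s 0 (tau i))^-1.
exists 2%N; exists Rs; exists a; exists r; split => //; split.
  case=> [[|[|[|k]]] Hk] //=; rewrite /R0 /R1 /R2.
  - by apply: SO_mul => //; apply: SO_tr.
  - by apply: SO_mul => //; apply: SO_mul => //; apply: SO_mul => //; apply: SO_tr.
  - by apply: SO_mul => //; apply: SO_tr.
split.
  rewrite /word_prod big_ord_recl big_ord_recl big_ord0 /=.
  rewrite /Rs /= mulmx1 /R0 /R1 /R2 Dinv DE !mulmxA.
  have UTU : U^T *m U = 1%:M by apply: mulmx1C.
  have cU : forall X : 'M[R]_d.+1, X *m U^T *m U = X by move=> X; rewrite -mulmxA UTU mulmx1.
  have cV : forall X : 'M[R]_d.+1, X *m V *m V^T = X by move=> X; rewrite -mulmxA VV mulmx1.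
  rewrite !cU !cV.
  have -> : P *m diag_mx s *m P^T *m T *m diag_mx s' *m T^T =
     (P *m diag_mx s *m P^T) *m (T *m diag_mx s' *m T^T) by rewrite !mulmxA.
  rewrite PE TE mulmx_diag; congr diag_mx; apply/rowP => i; rewrite !mxE.
  by [].
have r_dd : r dd = s 0 q / s 0 p by rewrite /r pidd taudd.
have r_0 : r 0 = s 0 p / s 0 q by rewrite /r pi0 tau0.
have r_i : forall i, i != 0 -> i != dd -> r i = 1.
  by move=> i i0 idd; rewrite /r tauE // divff.
have sp0 := s0 p; have sq0 := s0 q.
have rdd1 : r dd < 1 by rewrite r_dd ltr_pdivrMr // mul1r.
have r01 : 1 < r 0 by rewrite r_0 ltr_pdivlMr // mul1r.
have rdd0 : 0 < r dd by rewrite r_dd divr_gt0.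
split; first exact: rdd0.
split.
  move=> i id; have idd : i != dd by rewrite -val_eqE /= neq_ltn id.
  have [->|i0] := eqVneq i 0; first by apply: lt_trans r01.
  by rewrite (r_i i).
move=> i i1 id.
have idd : i != dd by rewrite -val_eqE /= neq_ltn id.
have i0 : i != 0 by rewrite -val_eqE /= -lt0n.
rewrite r_i // expr1n.
pose j0 : 'I_d := Ordinal d0.
rewrite (bigD1 j0) //= big1 ?mulr1.
  have -> : widen_ord (leqnSn d) j0 = 0 by apply: val_inj.
  exact: r01.
move=> j jj0; apply: r_i.
  by rewrite -val_eqE /=; apply: contra jj0 => /eqP H; apply/eqP/val_inj.
by rewrite -val_eqE /= neq_ltn ltn_ord.
Qed.
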